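(* Let $\nu,b,c,t$ be positive integers with $2\nu\ge 2b+c+1$, $\nu>b\ge t+1$ and $c\ge t$. For $x\in\{t,t+1,\dots,b\}$ let $$g_{b,c}(x)={x\brack t}{c-t+1\brack 1}^{x-t}N'(x;b;2\nu).$$ Then $g_{b,c}(x+1)<g_{b,c}(x)$ for every $x\in\{t,\dots,b-1\}$, i.e. $g_{b,c}$ is strictly decreasing on $\{t,\dots,b\}$.
   Context: $q$ is a prime power. Gaussian binomial coefficient: ${n\brack k}=\prod_{i=0}^{k-1}\frac{q^{n-i}-1}{q^{k-i}-1}$, ${n\brack 0}=1$. For integers $0\le a\le m\le\nu$, $N'(a;m;2\nu)=\prod_{i=1}^{m-a}\frac{q^{2(\nu-m+i)}-1}{q^{i}-1}$. *)

(* Defs.v *)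
From mathcomp Require Import all_boot all_order all_algebra.
Set Implicit Arguments. Unset Strict Implicit. Unset Printing Implicit Defensive.
Import Order.TTheory GRing.Theory Num.Theory.
Local Open Scope ring_scope.

Definition gauss (q n k : nat) : rat :=
  \prod_(0 <= i < k) (((q ^ (n - i))%:R - 1) / ((q ^ (k - i))%:R - 1)).

Definition Nprime (q a m nu : nat) : rat :=
  \prod_(1 <= i < (m - a).+1) (((q ^ (2 * (nu - m + i)))%:R - 1) / ((q ^ i)%:R - 1)).

Definition g_bc (q nu b c t x : nat) : rat :=
  gauss q x t * (gauss q (c - t + 1) 1) ^+ (x - t) * Nprime q x b nu.

(* Main.v *)
Require Import Defs.
From mathcomp Require Import all_boot all_order all_algebra.
Import Order.TTheory GRing.Theory Num.Theory.
From mathcomp Require Import zify ring lra.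
Lemma nat_h1 (q T S : nat) : 2 <= q -> 1 <= T -> q <= S -> T * S - 1 < q * T * (S - 1).
Proof.
move=> q2 T1 qS.
have e1 : T * q <= T * S by rewrite leq_mul2l qS orbT.
have e2 : T * S <= T * S * (q - 1) by rewrite leq_pmulr // subn_gt0.
have e3 : 1 <= T * S by rewrite muln_gt0; apply/andP; split; lia.
have e4 : q * T * (S - 1) = T * S * q - T * q.
  by rewrite mulnBr muln1 (mulnC q T) -mulnA (mulnC q S) mulnA.
have e5 : T * S * q = T * S + T * S * (q - 1).
  by rewrite mulnBr muln1 subnKC // leq_pmulr //; lia.
rewrite e4 e5. lia.
Qed.
Lemma nat_key (q T S A D W : nat) : 2 <= q -> 1 <= T -> q <= S -> 2 <= A -> 2 <= D ->
  A * D * T * q <= W ->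
  (T * S - 1) * (A - 1) * (D - 1) < (S - 1) * (q - 1) * (W - 1).
Proof.
move=> q2 T1 qS A2 D2 hW.
have P1 : 0 < (A - 1) * (D - 1) by rewrite muln_gt0; apply/andP; split; lia.
have P2 : (A - 1) * (D - 1) <= A * D - 1.
  rewrite mulnBr !mulnBl !muln1 mul1n.
  have : A <= A * D by rewrite leq_pmulr; lia.
  have : D <= A * D by rewrite leq_pmull; lia.
  lia.
have h4 := @nat_h1 q T S q2 T1 qS.
rewrite -mulnA.
apply: (@leq_trans (q * T * (S - 1) * ((A - 1) * (D - 1)))).
  by rewrite ltn_pmul2r.
have h5 : q * T * ((A - 1) * (D - 1)) <= W - 1.
  apply: (@leq_trans (q * T * (A * D - 1))); first by rewrite leq_mul2l P2 orbT.
  rewrite mulnBr muln1.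
  have : 1 <= q * T by rewrite muln_gt0; apply/andP; split; lia.
  have : q * T * (A * D) = A * D * T * q by rewrite [RHS]mulnC [A * D * T]mulnC [RHS]mulnA.
  lia.
apply: (@leq_trans ((S - 1) * (W - 1))).
  by rewrite mulnAC mulnC leq_mul2l h5 orbT.
rewrite -mulnA leq_mul2l; apply/orP; right.
by rewrite leq_pmull // subn_gt0.
Qed.
Local Open Scope ring_scope.

Definition Fq (q n : nat) : rat := (q ^ n)%:R - 1.

Section Aux.
Variable q : nat.
Hypothesis q2 : (2 <= q)%N.
Local Notation F := (Fq q).

Lemma F_nat n : F n = (q ^ n - 1)%N%:R.
Proof. by rewrite /Fq natrB // expn_gt0; apply/orP; left; lia. Qed.

Lemma F_gt0 n : (0 < n)%N -> 0 < F n.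
Proof.
move=> n0; rewrite F_nat ltr0n subn_gt0.
by rewrite -{1}(expn0 q) ltn_exp2l //.
Qed.

Lemma gauss_succ x t : gauss q x.+1 t * F (x.+1 - t) = gauss q x t * F x.+1.
Proof.
rewrite /gauss !prodf_div.
have H : \prod_(0 <= i < t) F (x.+1 - i) * F (x.+1 - t) =
         \prod_(0 <= i < t) F (x - i) * F x.+1.
  rewrite -(big_nat_recr t 0 (fun i => F (x.+1 - i))) //.
  rewrite big_nat_recl // mulrC; congr (_ * _).
rewrite mulrAC [in RHS]mulrAC; congr (_ / _); exact: H.
Qed.

Lemma gauss_gt0 x t : (t <= x)%N -> 0 < gauss q x t.
Proof.
move=> tx; rewrite /gauss big_seq; apply: prodr_gt0 => i.
rewrite mem_index_iota => /andP[_ it].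
apply: divr_gt0; apply: F_gt0; lia.
Qed.

Lemma Nprime_gt0 a m nu : 0 < Nprime q a m nu.
Proof.
rewrite /Nprime big_seq; apply: prodr_gt0 => i.
rewrite mem_index_iota => /andP[i1 _].
apply: divr_gt0; apply: F_gt0; lia.
Qed.

Lemma Nprime_succ x b nu : (x < b)%N -> (b <= nu)%N ->
  Nprime q x b nu = Nprime q x.+1 b nu * (F (2 * (nu - x)) / F (b - x)).
Proof.
move=> xb bnu; rewrite /Nprime.
have -> : (b - x = (b - x.+1).+1)%N by lia.
rewrite big_nat_recr //=; congr (_ * (_ / _)).
rewrite /Fq; do 3 f_equal; lia.
Qed.

Lemma gauss1 n : gauss q n 1 = F n / F 1.
Proof. by rewrite /gauss big_nat1 !subn0. Qed.

End Aux.

Theorem lemma3p1 (p k q nu b c t : nat) :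
  prime p -> (0 < k)%N -> q = (p ^ k)%N ->
  (0 < nu)%N -> (0 < b)%N -> (0 < c)%N -> (0 < t)%N ->
  (2 * b + c + 1 <= 2 * nu)%N -> (b < nu)%N -> (t + 1 <= b)%N -> (t <= c)%N ->
  forall x : nat, (t <= x)%N -> (x <= b - 1)%N ->
    g_bc q nu b c t x.+1 < g_bc q nu b c t x.
Proof.
move=> pp k0 qE nu0 b0 c0 t0 hnu bnu tb tc x tx xb.
have q2 : (2 <= q)%N.
  apply: (leq_trans (prime_gt1 pp)); rewrite qE -{1}(expn1 p) leq_pexp2l //.
  exact: prime_gt0.
have xb' : (x < b)%N by lia.
have Fs' : 0 < Fq q (x.+1 - t) by apply: F_gt0 => //; lia.
have eg : gauss q x.+1 t = gauss q x t * Fq q x.+1 / Fq q (x.+1 - t).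
  by rewrite -(@gauss_succ q) mulfK // gt_eqF.
rewrite /g_bc eg (@Nprime_succ q q2 x b nu xb' (ltnW bnu)) gauss1.
have -> : (x.+1 - t = (x - t).+1)%N by lia.
rewrite exprSr.
have {}Fs' : 0 < Fq q (x - t).+1 by apply: F_gt0.
set G := gauss q x t; set A := Fq q (c - t + 1) / Fq q 1; set N1 := Nprime q x.+1 b nu.
have G0 : 0 < G by apply: gauss_gt0.
have N0 : 0 < N1 by apply: Nprime_gt0.
have F1 : 0 < Fq q 1 by apply: F_gt0.
have Fc : 0 < Fq q (c - t + 1) by apply: F_gt0; lia.
have A0 : 0 < A by apply: divr_gt0.
have K0 : 0 < G * A ^+ (x - t) * N1 by rewrite !mulr_gt0 // exprn_gt0.
have Fd : 0 < Fq q (b - x) by apply: F_gt0; lia.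
have -> : G * Fq q x.+1 / Fq q (x - t).+1 * (A ^+ (x - t) * A) * N1 =
  (G * A ^+ (x - t) * N1) * (Fq q x.+1 / Fq q (x - t).+1 * A) by ring.
have -> : G * A ^+ (x - t) * (N1 * (Fq q (2 * (nu - x)) / Fq q (b - x))) =
  (G * A ^+ (x - t) * N1) * (Fq q (2 * (nu - x)) / Fq q (b - x)) by ring.
rewrite ltr_pM2l // /A mulf_div ltr_pdivrMr ?mulr_gt0 // mulrAC ltr_pdivlMr //.
rewrite !(@F_nat q q2) -!natrM ltr_nat.
have T1 : (1 <= q ^ t)%N by rewrite expn_gt0; apply/orP; left; lia.
have qS : (q <= q ^ (x - t).+1)%N by rewrite -{1}(expn1 q) leq_pexp2l //; lia.
have A2 : (2 <= q ^ (c - t + 1))%N.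
  by apply: (leq_trans q2); rewrite -{1}(expn1 q) leq_pexp2l //; lia.
have D2 : (2 <= q ^ (b - x))%N.
  by apply: (leq_trans q2); rewrite -{1}(expn1 q) leq_pexp2l //; lia.
have hW : (q ^ (c - t + 1) * q ^ (b - x) * q ^ t * q <= q ^ (2 * (nu - x)))%N.
  by rewrite -{4}(expn1 q) -!expnD leq_pexp2l //; lia.
have H := @nat_key q _ _ _ _ _ q2 T1 qS A2 D2 hW.
rewrite -expnD in H.
have E : (t + (x - t).+1 = x.+1)%N by lia.
rewrite E in H.
by rewrite expn1 (mulnC (q ^ (2 * (nu - x)) - 1)%N).
Qed.
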